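(* Let $p\in(0,1]$. In the random node-based stable matching model described in the context, the probability $D^{(N)}(i,j)=\mathbb P(i\text{ and }j\text{ are matched to each other in the stable matching})$ does not depend on $N$ as long as $N\ge\max(i,j)$; write it $D(i,j)$. It satisfies $D(i,i)=0$, $D(i,j)=D(j,i)$, $D(1,k)=p(1-p)^{k-2}$ for $k\ge2$, and for all integers $2\le i<j$, $$D(i,j)=\bigl(1-(1-p)^{i-2}\bigr)D(i-2,j-2)+\bigl((1-p)^{i-1}-(1-p)^{j-2}\bigr)D(i-1,j-2)+(1-p)^{j-1}D(i-1,j-1),$$ with the convention that the first term is $0$ when $i=2$.
   Context: Model: $N\ge2$ nodes labeled $1,\dots,N$; the acceptance graph $G$ is an Erdős–Rényi random graph $\mathcal G(N,p)$ (each of the $\binom N2$ possible edges present independently with probability $p$). Preferences are node-based: every node prefers a neighbor with smaller label to one with larger label. A matching $M\subseteq E(G)$ is stable if there is no edge $\{u,v\}\in E(G)\setminus M$ such that each of $u,v$ is either unmatched in $M$ or matched in $M$ to a node with larger label than the other endpoint. For such preferences there is a unique stable matching. *)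

(* Defs.v *)
From HB Require Import structures.
From mathcomp Require Import all_boot all_order all_algebra.
Set Implicit Arguments. Unset Strict Implicit. Unset Printing Implicit Defensive.
Import Order.TTheory GRing.Theory Num.Theory.
Local Open Scope ring_scope.

(* Nodes are u : 'I_N, and node u has label u.+1 (labels 1..N).
   Comparing labels is the same as comparing the ordinals. *)

Definition pairs (N : nat) : {set {set 'I_N}} := [set e : {set 'I_N} | #|e| == 2%N].

Definition is_matching N (G M : {set {set 'I_N}}) : bool :=
  (M \subset G) &&
  [forall u : 'I_N, #|[set e in M | u \in e]| <= 1]%N.

(* "u prefers v to its current situation": u is unmatched in M, or u is matched
   in M to a node x with larger label than v. *)
Definition prefers N (M : {set {set 'I_N}}) (u v : 'I_N) : bool :=
  [forall f in M, (u \in f) ==> [forall x in f, (x != u) ==> (v < x)%N]].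

Definition blocking N (M : {set {set 'I_N}}) (e : {set 'I_N}) : bool :=
  [forall u in e, forall v in e, (u != v) ==> prefers M u v].

Definition is_stable N (G M : {set {set 'I_N}}) : bool :=
  is_matching G M && [forall e in G :\: M, ~~ blocking M e].

(* The nodes with labels i and j are matched to each other in the stable
   matching of G (the stable matching being unique, "there is a stable
   matching containing the edge" is the event of the paper). *)
Definition matched_ij N (G : {set {set 'I_N}}) (i j : nat) : bool :=
  [exists u : 'I_N, exists v : 'I_N,
     [&& u.+1 == i, v.+1 == j &
         [exists M : {set {set 'I_N}}, is_stable G M && ([set u; v] \in M)]]].

Definition er_weight (R : numDomainType) (N : nat) (p : R) (G : {set {set 'I_N}}) : R :=
  p ^+ #|G| * (1 - p) ^+ (#|pairs N| - #|G|).

Definition DN (R : numDomainType) (N : nat) (p : R) (i j : nat) : R :=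
  \sum_(G in powerset (pairs N) | matched_ij G i j) er_weight p G.

(* Main.v *)
Require Import Defs.
From HB Require Import structures.
From mathcomp Require Import all_boot all_order all_algebra.
From mathcomp Require Import zify ring lra.
Import Order.TTheory GRing.Theory Num.Theory.
Set Implicit Arguments. Unset Strict Implicit. Unset Printing Implicit Defensive.

Module M1.
Local Open Scope ring_scope.

Section Prob.
Variable R : realFieldType.
Variable p : R.
Variable T : finType.

Definition wt (S A : {set T}) : R := p ^+ #|A| * (1 - p) ^+ (#|S| - #|A|).
Definition Pr (S : {set T}) (F : {set T} -> R) : R :=
  \sum_(A in powerset S) wt S A * F A.

Lemma eq_Pr (S : {set T}) (F F' : {set T} -> R) : (forall A : {set T}, A \subset S -> F A = F' A) -> Pr S F = Pr S F'.
Proof.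
move=> h; apply: eq_bigr => A; rewrite powersetE => /h ->; done.
Qed.

Lemma PrD (S : {set T}) (F G : {set T} -> R) : Pr S (fun A => F A + G A) = Pr S F + Pr S G.
Proof. by rewrite /Pr -big_split; apply: eq_bigr => A _; rewrite mulrDr. Qed.

Lemma PrZ (S : {set T}) c (F : {set T} -> R) : Pr S (fun A => c * F A) = c * Pr S F.
Proof. by rewrite /Pr mulr_sumr; apply: eq_bigr => A _; rewrite mulrCA. Qed.

Lemma PrB (S : {set T}) (F G : {set T} -> R) : Pr S (fun A => F A - G A) = Pr S F - Pr S G.
Proof.
rewrite /Pr -sumrB; apply: eq_bigr => A _; by rewrite mulrBr.
Qed.

Lemma setU_capl (S1 S2 A1 A2 : {set T}) :
  [disjoint S1 & S2] -> A1 \subset S1 -> A2 \subset S2 ->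
  (A1 :|: A2) :&: S1 = A1.
Proof.
move=> hd h1 h2; apply/setP => z; rewrite !inE.
case z1: (z \in A1); first by rewrite (subsetP h1 z z1).
case z2: (z \in A2) => //=.
by rewrite (disjointFl hd (subsetP h2 z z2)).
Qed.

Lemma Pr_split (S1 S2 : {set T}) (F : {set T} -> R) : [disjoint S1 & S2] ->
  Pr (S1 :|: S2) F = Pr S1 (fun A1 => Pr S2 (fun A2 => F (A1 :|: A2))).
Proof.
move=> hd.
have hd' : [disjoint S2 & S1] by rewrite disjoint_sym.
rewrite /Pr.
under [RHS]eq_bigr => A1 _ do rewrite big_distrr /=.
rewrite pair_big /=.
have -> : powerset (S1 :|: S2) =
   (fun q : {set T} * {set T} => q.1 :|: q.2) @: setX (powerset S1) (powerset S2).
  apply/setP => A; rewrite powersetE; apply/idP/imsetP.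
    move=> hA; exists (A :&: S1, A :&: S2).
      by rewrite in_setX !powersetE !subsetIr.
    by rewrite /= -setIUr; apply/esym/setIidPl.
  case=> [[A1 A2]]; rewrite in_setX !powersetE /= => /andP[h1 h2] ->.
  exact: setUSS.
rewrite big_imset /=; last first.
  move=> [A1 A2] [B1 B2]; rewrite !in_setX !powersetE /=.
  move=> /andP[h1 h2] /andP[g1 g2] e.
  have e1 : A1 = B1 by rewrite -(setU_capl hd h1 h2) e (setU_capl hd g1 g2).
  have e2 : A2 = B2.
    by rewrite -(setU_capl hd' h2 h1) setUC e setUC (setU_capl hd' g2 g1).
  by rewrite e1 e2.
apply: eq_big => [[A1 A2]|[A1 A2]]; first by rewrite in_setX.
rewrite in_setX !powersetE /= => /andP[h1 h2].
rewrite mulrA; congr (_ * _).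
have c12 : #|A1 :|: A2| = (#|A1| + #|A2|)%N.
  rewrite cardsU; suff -> : A1 :&: A2 = set0 by rewrite cards0 subn0.
  apply/setP => z; rewrite !inE; case z1: (z \in A1) => //=.
  apply/negbTE/negP => /(subsetP h2) z2.
  by rewrite (disjointFr hd (subsetP h1 z z1)) in z2.
have cS : #|S1 :|: S2| = (#|S1| + #|S2|)%N.
  rewrite cardsU; suff -> : S1 :&: S2 = set0 by rewrite cards0 subn0.
  apply/setP => z; rewrite !inE; case z1: (z \in S1) => //=.
  by rewrite (disjointFr hd z1).
have l1 := subset_leq_card h1; have l2 := subset_leq_card h2.
rewrite /wt c12 cS exprD.
have -> : (#|S1| + #|S2| - (#|A1| + #|A2|) = (#|S1| - #|A1|) + (#|S2| - #|A2|))%N by lia.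
rewrite exprD; ring.
Qed.

Lemma Pr1 (S : {set T}) : Pr S (fun _ => 1) = 1.
Proof.
elim: {S}#|S| {-2}S (erefl #|S|) => [|n IH] S hS.
  move/eqP: hS; rewrite cards_eq0 => /eqP ->.
  by rewrite /Pr powerset0 big_set1 /wt cards0 !expr0 !mulr1.
have [x xS] : exists x, x \in S.
  by apply/set0Pn; rewrite -card_gt0 hS.
have -> : S = [set x] :|: (S :\ x) by rewrite setD1K.
rewrite Pr_split; last by rewrite disjoints1 setD11.
have hS' : #|S :\ x| = n by move: hS; rewrite (cardsD1 x) xS => -[].
under eq_Pr => A _ do rewrite IH //.
rewrite /Pr powerset1 big_setU1 ?big_set1 /=; last first.
  rewrite !inE; apply/eqP => /setP /(_ x); rewrite !inE eqxx //.
rewrite /wt cards0 cards1 /= subn0 subnn !expr0 !expr1.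
ring.
Qed.

Lemma Pr_const (S : {set T}) c : Pr S (fun _ => c) = c.
Proof.
by rewrite -[c]mulr1 -[X in Pr S X]/(fun A : {set T} => c * (fun _ => 1) A) PrZ Pr1.
Qed.

Lemma Pr_local (S1 S2 : {set T}) (F : {set T} -> R) : [disjoint S1 & S2] ->
  (forall A1 A2 : {set T}, A1 \subset S1 -> A2 \subset S2 -> F (A1 :|: A2) = F A1) ->
  Pr (S1 :|: S2) F = Pr S1 F.
Proof.
move=> hd h; rewrite Pr_split //; apply: eq_Pr => A1 h1.
rewrite -[RHS](Pr_const S2 (F A1)); apply: eq_Pr => A2 h2; exact: h.
Qed.

Lemma Pr_none (S O : {set T}) : O \subset S ->
  Pr S (fun A => (A :&: O == set0)%:R) = (1 - p) ^+ #|O|.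
Proof.
move=> hO.
have -> : S = O :|: (S :\: O).
  apply/setP => z; rewrite !inE; case zO: (z \in O) => //=.
  by rewrite (subsetP hO z zO).
have hd : [disjoint O & S :\: O].
  rewrite -setI_eq0; apply/eqP/setP => z; rewrite !inE.
  by case: (z \in O); rewrite ?andbF.
rewrite Pr_local //; last first.
  move=> A1 A2 h1 h2; rewrite setIC (setIC A1) setIUr.
  suff -> : O :&: A2 = set0 by rewrite setU0.
  apply/setP => z; rewrite !inE; case zO: (z \in O) => //=.
  by apply/negbTE/negP => /(subsetP h2); rewrite inE zO.
rewrite /Pr (bigD1 set0) ?powersetE ?sub0set //= set0I eqxx mulr1.
rewrite big1 ?addr0; last first.
  move=> A /andP[]; rewrite powersetE => hA nA.
  by rewrite (setIidPl hA) (negbTE nA) mulr0.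
by rewrite /wt cards0 expr0 mul1r subn0.
Qed.

End Prob.

End M1.
Import M1.

Module M2.

Section Det.
Variable N : nat.
Implicit Types (G M : {set {set 'I_N}}) (e f : {set 'I_N}) (u w x y z a v : 'I_N).

Lemma prefersP M u w :
  reflect (forall f x, f \in M -> u \in f -> x \in f -> x != u -> (w < x)%N)
          (prefers M u w).
Proof.
rewrite /prefers; apply: (iffP forallP) => [h f x fM uf xf xu|h f].
  have := h f; rewrite fM uf /= => /forallP /(_ x); rewrite xf xu; by [].
apply/implyP => fM; apply/implyP => uf; apply/forallP => x.
apply/implyP => xf; apply/implyP => xu; exact: (h f x).
Qed.

Lemma blockingP M e :
  reflect (forall u w, u \in e -> w \in e -> u != w -> prefers M u w)
          (blocking M e).
Proof.
rewrite /blocking; apply: (iffP forallP) => [h u w ue we uw|h u].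
  have := h u; rewrite ue /= => /forallP /(_ w); rewrite we uw; by [].
apply/implyP => ue; apply/forallP => w; apply/implyP => we; apply/implyP.
exact: h.
Qed.

Lemma two_set e u x : #|e| = 2 -> u \in e -> x \in e -> u != x -> e = [set u; x].
Proof.
move=> c ue xe ux; apply/eqP; rewrite eq_sym eqEcard cards2 ux c leqnn andbT.
by apply/subsetP => z; rewrite !inE => /orP[] /eqP ->.
Qed.

Lemma pairsE e : (e \in pairs N) = (#|e| == 2).
Proof. by rewrite inE. Qed.

Lemma pair_neq u x : #|[set u; x]| = 2 -> u != x.
Proof. by rewrite cards2; case: (u != x). Qed.

Lemma match_uniq G M e1 e2 u : is_matching G M -> e1 \in M -> e2 \in M ->
  u \in e1 -> u \in e2 -> e1 = e2.
Proof.
move=> /andP[_ /forallP /(_ u) /card_le1_eqP h] m1 m2 u1 u2.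
by apply: h; rewrite inE ?m1 ?m2 ?u1 ?u2.
Qed.

Definition mt G x y := [exists M, is_stable G M && ([set x; y] \in M)].

Lemma mtC G x y : mt G x y = mt G y x.
Proof. by rewrite /mt setUC. Qed.

Lemma mt_sub G x y : G \subset pairs N -> mt G x y -> x != y.
Proof.
move=> hG /existsP[M /andP[/andP[/andP[sMG _] _] xyM]].
have := subsetP hG _ (subsetP sMG _ xyM); rewrite pairsE => /eqP.
exact: pair_neq.
Qed.

Lemma blocking_mono M1 M2 e :
  (forall u f, u \in e -> f \in M2 -> u \in f -> f \in M1) ->
  blocking M1 e -> blocking M2 e.
Proof.
move=> h /blockingP b; apply/blockingP => u w ue we uw.
apply/prefersP => f x fM uf xf xu.
move/prefersP: (b u w ue we uw) => pb; exact: (pb f x (h u f ue fM uf) uf xf xu).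
Qed.

Lemma other_end e u : #|e| = 2 -> u \in e -> exists x, x != u /\ e = [set u; x].
Proof.
move=> /eqP/cards2P [x1 [x2 [ne ->]]]; rewrite !inE => /orP[]/eqP ->.
  by exists x2; rewrite eq_sym.
by exists x1; rewrite setUC.
Qed.

Section Peel.
Variables (G : {set {set 'I_N}}) (a v : 'I_N).
Hypotheses (hG : G \subset pairs N)
  (hmin : forall e z, e \in G -> z \in e -> (a <= z)%N)
  (hav : [set a; v] \in G)
  (hvmin : forall z, [set a; z] \in G -> (v <= z)%N).

Definition Gp := [set e in G | (a \notin e) && (v \notin e)].

Lemma cardG e : e \in G -> #|e| = 2.
Proof. by move=> /(subsetP hG); rewrite pairsE => /eqP. Qed.

Lemma av_neq : a != v.
Proof. exact: pair_neq (cardG hav). Qed.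

Lemma stable_av M : is_stable G M -> [set a; v] \in M.
Proof.
case/andP=> /andP[sMG mM] /forallP nb.
apply/negPn/negP => nav.
have := nb [set a; v]; rewrite !inE nav hav /= => /negP; apply.
apply/blockingP => u w; rewrite !inE => /orP[]/eqP-> /orP[]/eqP->;
  rewrite ?eqxx // => _.
- apply/prefersP => f x fM af xf xa.
  have fG := subsetP sMG f fM.
  have ef : f = [set a; x] by apply: two_set (cardG fG) af xf _; rewrite eq_sym.
  have vx : (v <= x)%N by apply: hvmin; rewrite -ef.
  rewrite ltn_neqAle vx andbT; apply/negP => /eqP /val_inj vx'.
  by move: nav; rewrite vx' -ef fM.
- apply/prefersP => f x fM vf xf xv.
  have fG := subsetP sMG f fM.
  have ef : f = [set v; x] by apply: two_set (cardG fG) vf xf _; rewrite eq_sym.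
  have ax := hmin fG xf.
  rewrite ltn_neqAle ax andbT; apply/negP => /eqP /val_inj ax'.
  by move: nav; rewrite ax' setUC -ef fM.
Qed.

Lemma stable_Gp_of M : is_stable G M -> is_stable Gp (M :\ [set a; v]).
Proof.
move=> st; have avM := stable_av st.
case/andP: st => /andP[sMG mM] /forallP nb.
have mM' : is_matching G M by rewrite /is_matching sMG mM.
apply/andP; split; first (apply/andP; split).
- apply/subsetP => e; rewrite !inE => /andP[eav eM].
  rewrite (subsetP sMG e eM) /=; apply/andP; split; apply/negP => he.
    by move: eav; rewrite (match_uniq mM' eM avM he) ?eqxx // !inE eqxx.
  by move: eav; rewrite (match_uniq mM' eM avM he) ?eqxx // !inE eqxx orbT.
- apply/forallP => u; apply: leq_trans (forallP mM u).
  apply: subset_leq_card; apply/subsetP => e; rewrite !inE.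
  by case/andP => /andP[_ ->] ->.
apply/forallP => e; apply/implyP; rewrite !inE negb_and negbK.
case/andP => eM' /andP[eG /andP[ae ve]].
have eM : e \notin M.
  apply/negP => eM; move: eM'; rewrite eM orbF => /eqP eav.
  by move: ae; rewrite eav !inE eqxx.
have := nb e; rewrite !inE eM eG /=; apply: contra.
apply: blocking_mono => u f ue fM uf; rewrite !inE fM andbT.
apply/negP => /eqP fav; move: uf; rewrite fav !inE => /orP[]/eqP uav.
  by move: ae; rewrite -uav ue.
by move: ve; rewrite -uav ue.
Qed.

Lemma stable_G_of M : is_stable Gp M -> is_stable G ([set a; v] |: M).
Proof.
case/andP=> /andP[sMG mM] /forallP nb.
have sM : forall e, e \in M -> [&& e \in G, a \notin e & v \notin e].
  by move=> e /(subsetP sMG); rewrite inE.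
apply/andP; split; first (apply/andP; split).
- apply/subsetP => e; rewrite !inE => /orP[/eqP->//|/sM]; by case/andP.
- apply/forallP => u.
  case uav: (u \in [set a; v]).
    apply: leq_trans (_ : #|[set [set a; v]]| <= 1)%N; last by rewrite cards1.
    apply: subset_leq_card; apply/subsetP => e; rewrite !inE.
    case/andP => /orP[->//|/sM /and3P[_ ae ve]] ue.
    by move: uav; rewrite !inE => /orP[]/eqP uv; [move: ae|move: ve]; rewrite -uv ue.
  apply: leq_trans (forallP mM u).
  apply: subset_leq_card; apply/subsetP => e; rewrite !inE.
  case/andP => /orP[/eqP eav|->] ue //.
  by move: uav; rewrite -eav ue.
have avM : [set a; v] \in [set a; v] |: M by rewrite setU11.
apply/forallP => e; apply/implyP; rewrite !inE negb_or => /andP[/andP[eav eM] eG].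
case ae: (a \in e).
  have [x [xa ex]] := other_end (cardG eG) ae.
  apply/negP => /blockingP /(_ a x ae).
  rewrite ex !inE eqxx orbT eq_sym xa => /(_ isT isT) /prefersP.
  move=> /(_ _ v avM (set21 _ _) (set22 _ _)); rewrite eq_sym av_neq.
  move=> /(_ isT); have : (v <= x)%N by apply: hvmin; rewrite -ex.
  lia.
case ve: (v \in e).
  have [x [xv ex]] := other_end (cardG eG) ve.
  apply/negP => /blockingP /(_ v x ve).
  rewrite ex !inE eqxx orbT eq_sym xv => /(_ isT isT) /prefersP.
  move=> /(_ _ a avM (set22 _ _) (set21 _ _)); rewrite av_neq => /(_ isT).
  have : (a <= x)%N by apply: (hmin eG); rewrite ex set22.
  lia.
have := nb e; rewrite !inE eM eG ae ve /=; apply: contra.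
apply: blocking_mono => u f ue fM uf; by rewrite inE fM orbT.
Qed.

Lemma mt_peel x y : x != a -> x != v -> y != a -> y != v ->
  mt G x y = mt Gp x y.
Proof.
move=> xa xv ya yv; apply/existsP/existsP => [[M /andP[st xyM]]|[M /andP[st xyM]]].
  exists (M :\ [set a; v]); rewrite stable_Gp_of //= !inE xyM andbT.
  apply/negP => /eqP /setP /(_ a); rewrite !inE eqxx /=.
  by rewrite eq_sym (negbTE xa) eq_sym (negbTE ya).
by exists ([set a; v] |: M); rewrite stable_G_of //= setU1r.
Qed.

Lemma mt_a y : (exists M, is_stable Gp M) -> mt G a y = (y == v).
Proof.
move=> [M' st']; apply/existsP/eqP => [[M /andP[st ayM]]|->].
  have avM := stable_av st.
  have mM : is_matching G M by case/andP: st.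
  have e := match_uniq mM ayM avM (setU11 _ _) (setU11 _ _).
  have : y \in [set a; v] by rewrite -e !inE eqxx orbT.
  rewrite !inE => /orP[/eqP ya|/eqP//].
  have := cardG (subsetP (proj1 (andP mM)) _ ayM); rewrite ya setUid cards1 //.
by exists ([set a; v] |: M'); rewrite stable_G_of // setU11.
Qed.

Lemma mt_v y : y != a -> mt G v y = false.
Proof.
move=> ya; apply/existsP => [[M /andP[st vyM]]].
have avM := stable_av st.
have mM : is_matching G M by case/andP: st.
have e := match_uniq mM vyM avM (setU11 _ _) (set22 _ _).
have : y \in [set a; v] by rewrite -e !inE eqxx orbT.
rewrite !inE (negbTE ya) /= => /eqP yv.
have := cardG (subsetP (proj1 (andP mM)) _ vyM); rewrite yv setUid cards1 //.
Qed.

End Peel.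

Lemma mt_iso G a y : (forall e, e \in G -> a \notin e) -> mt G a y = false.
Proof.
move=> h; apply/existsP => [[M /andP[/andP[/andP[sMG _] _] ayM]]].
by have := h _ (subsetP sMG _ ayM); rewrite !inE eqxx.
Qed.

Lemma stable_set0 : is_stable (set0 : {set {set 'I_N}}) set0.
Proof.
apply/andP; split; first (apply/andP; split).
- exact: sub0set.
- by apply/forallP => u; apply: leq_trans (_ : #|(set0 : {set {set 'I_N}})| <= 1)%N;
    [apply: subset_leq_card; apply/subsetP => e; rewrite !inE|rewrite cards0].
by apply/forallP => e; rewrite !inE andbF.
Qed.

Lemma stable_exists G : G \subset pairs N -> exists M, is_stable G M.
Proof.
move: (leqnn #|G|); move: {2}#|G| => n; elim: n G => [|n IH] G hc hG.
  have -> : G = set0 by apply/eqP; rewrite -cards_eq0; lia.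
  by exists set0; exact: stable_set0.
case: (altP (G =P set0)) => [->|nG]; first by exists set0; exact: stable_set0.
have [e0 e0G] : exists e0, e0 \in G by apply/set0Pn.
have ce0 : #|e0| = 2 by move: (subsetP hG _ e0G); rewrite pairsE => /eqP.
have [z0 z0e] : exists z0, z0 \in e0 by apply/set0Pn; rewrite -card_gt0 ce0.
pose P z := [exists e in G, z \in e].
have Pz0 : P z0 by apply/existsP; exists e0; rewrite e0G.
case: (arg_minnP (fun z : 'I_N => nat_of_ord z) Pz0) => a Pa amin.
have [e1 /andP[e1G ae1]] := existsP Pa.
have [x0 [x0a ex0]] := other_end (cardG hG e1G) ae1.
have Px0 : [set a; x0] \in G by rewrite -ex0.
case: (@arg_minnP _ x0 (fun z => [set a; z] \in G) (fun z : 'I_N => nat_of_ord z) Px0) => v avG vmin.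
have hmin : forall e z, e \in G -> z \in e -> (a <= z)%N.
  by move=> e z eG ze; apply: amin; apply/existsP; exists e; rewrite eG.
set G' := Gp G a v.
have sG' : G' \subset G by apply/subsetP => e; rewrite inE => /andP[].
have ltc : (#|G'| < #|G|)%N.
  apply: proper_card; rewrite properE sG' /=; apply/subsetPn.
  exists [set a; v]; first exact: avG.
  by rewrite inE set21 andbF.
have cG' : (#|G'| <= n)%N by lia.
have [M st] := IH G' cG' (subset_trans sG' hG).
exists ([set a; v] |: M); exact: (stable_G_of hG hmin avG vmin).
Qed.

End Det.

End M2.
Import M2.

Module M3.
Local Open Scope ring_scope.

Section Main.
Variable R : realFieldType.
Variable p : R.
Variable N : nat.
Implicit Types (G M : {set {set 'I_N}}) (e f : {set 'I_N}) (u w x y z a v : 'I_N)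
  (V U W : {set 'I_N}).

Definition pairsV V := [set e in pairs N | e \subset V].
Definition rk V x := #|[set z in V | (z <= x)%N]|.
Definition Pm V x y := Pr p (pairsV V) (fun G => (mt G x y)%:R).

Lemma pairsV_sub V : pairsV V \subset pairs N.
Proof. by apply/subsetP => e; rewrite inE => /andP[]. Qed.

Lemma pairsV_split U w :
  pairsV U = [set e in pairsV U | w \in e] :|: pairsV (U :\ w).
Proof.
apply/setP => e; rewrite /pairsV !inE; case we: (w \in e); rewrite ?andbT.
  rewrite orb_idr // => /andP[-> /subsetP h] /=; apply/subsetP => z /h.
  by rewrite inE => /andP[].
rewrite andbF /=; case: (#|e| == 2) => //=; apply/idP/idP => /subsetP h;
  apply/subsetP => z ze; move: (h z ze); rewrite !inE.
  move=> ->; rewrite andbT; apply/eqP => zw; by rewrite -zw ze in we.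
by case/andP.
Qed.

Lemma pairsV_disj U w :
  [disjoint [set e in pairsV U | w \in e] & pairsV (U :\ w)].
Proof.
rewrite -setI_eq0; apply/eqP/setP => e; rewrite !inE.
apply/negP => /andP[/andP[_ we] /andP[_ /subsetP /(_ w we)]].
by rewrite !inE eqxx.
Qed.

Lemma rkD1 V w t : w \in V -> rk (V :\ w) t = (rk V t - (w <= t)%N)%N.
Proof.
move=> wV; rewrite /rk (cardsD1 w [set z in V | (z <= t)%N]) !inE wV /=.
have -> : [set z in V :\ w | (z <= t)%N] = [set z in V | (z <= t)%N] :\ w.
  by apply/setP => z; rewrite !inE andbA.
by rewrite addKn.
Qed.

Lemma rk_ge1 V t : t \in V -> (1 <= rk V t)%N.
Proof.
by move=> tV; rewrite card_gt0; apply/set0Pn; exists t; rewrite inE tV leqnn.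
Qed.

Lemma rk_lt V s t : s \in V -> t \in V -> (s < t)%N -> (rk V s < rk V t)%N.
Proof.
move=> sV tV st; apply: proper_card; rewrite properE; apply/andP; split.
  apply/subsetP => z; rewrite !inE => /andP[-> zs] /=; lia.
apply/subsetPn; exists t; first by rewrite inE tV leqnn.
by rewrite inE tV /= -ltnNge.
Qed.

Fixpoint E (i j : nat) {struct i} : R :=
  match i with
  | 0 => 0
  | 1 => if (1 < j)%N then p * (1 - p) ^+ (j - 2) else 0
  | (k.+1 as i1).+1 =>
      if (i1.+1 < j)%N then
        (1 - (1 - p) ^+ k) * E k (j - 2)
        + ((1 - p) ^+ i1 - (1 - p) ^+ (j - 2)) * E i1 (j - 2)
        + (1 - p) ^+ (j - 1) * E i1 (j - 1)
      else 0
  end.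

Definition Dsym i j := if (i < j)%N then E i j else E j i.

Lemma E_ge i j : (j <= i)%N -> E i j = 0.
Proof.
case: i => [|[|k]] //= h; first by rewrite ltnNge h.
by rewrite ltnNge h.
Qed.

Lemma E_step k j : E k.+2 j =
  if (k.+2 < j)%N then
        (1 - (1 - p) ^+ k) * E k (j - 2)
        + ((1 - p) ^+ k.+1 - (1 - p) ^+ (j - 2)) * E k.+1 (j - 2)
        + (1 - p) ^+ (j - 1) * E k.+1 (j - 1)
  else 0.
Proof. by []. Qed.

Lemma Dsym_le i j : (i <= j)%N -> Dsym i j = E i j.
Proof.
rewrite /Dsym leq_eqVlt => /orP[/eqP->|->//]; by rewrite ltnn.
Qed.

Lemma DsymC i j : Dsym i j = Dsym j i.
Proof.
by rewrite /Dsym; case: (ltngtP i j) => [h|h|->] //.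
Qed.

Section Nbr.
Variables (V : {set 'I_N}) (a : 'I_N).
Hypotheses (aV : a \in V) (amin : forall z, z \in V -> (a <= z)%N).

Definition Aa := [set e in pairsV V | a \in e].
Definition Bs := pairsV (V :\ a).
Definition Zle t := [set z in V :\ a | (z <= t)%N].
Definition Zlt t := [set z in V :\ a | (z < t)%N].
Definition noNb (GA : {set {set 'I_N}}) (Z : {set 'I_N}) := [forall z in Z, [set a; z] \notin GA].

Lemma setAz_in z : z \in V :\ a -> [set a; z] \in Aa.
Proof.
rewrite !inE => /andP[za zV]; have az : a != z by rewrite eq_sym.
rewrite eqxx andbT cards2 az /=.
by apply/subsetP => u; rewrite !inE => /orP[]/eqP->.
Qed.

Lemma edgeAa e : e \in Aa -> exists2 z, z \in V :\ a & e = [set a; z].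
Proof.
rewrite !inE => /andP[/andP[ce sV] ae].
have [z [za ez]] := other_end (eqP ce) ae.
exists z => //; rewrite !inE za /=; apply: (subsetP sV); by rewrite ez set22.
Qed.

Lemma Pr_noNb (Z : {set 'I_N}) : Z \subset V :\ a ->
  Pr p Aa (fun GA => (noNb GA Z)%:R) = (1 - p) ^+ #|Z|.
Proof.
move=> hZ; pose O := [set [set a; z] | z in Z].
have inj : {in Z &, injective (fun z => [set a; z])}.
  move=> z1 z2 z1Z z2Z e.
  have : z1 \in [set a; z2] by rewrite -e set22.
  rewrite !inE => /orP[/eqP z1a|/eqP//].
  by move: (subsetP hZ _ z1Z); rewrite !inE z1a eqxx.
have cO : #|O| = #|Z| by rewrite card_in_imset.
rewrite -cO -(@Pr_none _ _ _ Aa); last first.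
  by apply/subsetP => e /imsetP[z zZ ->]; apply: setAz_in; exact: subsetP hZ _ zZ.
apply: eq_Pr => GA _; congr ((nat_of_bool _)%:R); rewrite /noNb.
apply/idP/idP => [/forallP h|/eqP h]; last apply/forallP => z.
  apply/eqP/setP => e; rewrite !inE; apply/negP => /andP[eGA /imsetP[z zZ ez]].
  by have := h z; rewrite zZ /= -ez eGA.
apply/implyP => zZ; apply/negP => zG.
have : [set a; z] \in GA :&: O by rewrite inE zG; apply/imsetP; exists z.
by rewrite h inE.
Qed.

Lemma noNb0 (Z : {set 'I_N}) : noNb set0 Z.
Proof. by apply/forallP => z; rewrite inE implybT. Qed.

Section Min.
Variables (GA : {set {set 'I_N}}) (v : 'I_N).
Hypotheses (hv : [set a; v] \in GA) (vmin : forall z, [set a; z] \in GA -> (v <= z)%N)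
  (hGA : GA \subset Aa).

Lemma v_in : v \in V :\ a.
Proof.
have [z zV e] := edgeAa (subsetP hGA _ hv).
have : v \in [set a; z] by rewrite -e set22.
rewrite !inE => /orP[/eqP va|/eqP ->]; last by move: zV; rewrite !inE.
by have := subsetP hGA _ hv; rewrite !inE va setUid cards1 => /andP[/andP[]].
Qed.

Lemma noNb_lt t : noNb GA (Zlt t) = (t <= v)%N.
Proof.
apply/forallP/idP => [h|tv z].
  rewrite leqNgt; apply/negP => vt; have := h v.
  by rewrite inE v_in vt hv.
apply/implyP; rewrite inE => /andP[_ zt]; apply/negP => /vmin; lia.
Qed.

Lemma noNb_le t : noNb GA (Zle t) = (t < v)%N.
Proof.
apply/forallP/idP => [h|tv z].
  rewrite ltnNge; apply/negP => vt; have := h v.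
  by rewrite inE v_in vt hv.
apply/implyP; rewrite inE => /andP[_ zt]; apply/negP => /vmin; lia.
Qed.
End Min.

Lemma nb_cases (GA : {set {set 'I_N}}) : GA \subset Aa ->
  GA = set0 \/ exists v, [/\ [set a; v] \in GA,
                             (forall z, [set a; z] \in GA -> (v <= z)%N) & v \in V :\ a].
Proof.
move=> hGA; case: (altP (GA =P set0)) => [->|ne]; first by left.
right; have [e eG] := set0Pn _ ne.
have [z zV ez] := edgeAa (subsetP hGA _ eG).
have Pz : [set a; z] \in GA by rewrite -ez.
case: (@arg_minnP _ z (fun z => [set a; z] \in GA) (fun z : 'I_N => nat_of_ord z) Pz)
  => v hv vmin.
by exists v; split => //; apply: (v_in hv).
Qed.

Section Union.
Variables (GA GB : {set {set 'I_N}}).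
Hypotheses (hGA : GA \subset Aa) (hGB : GB \subset Bs).

Lemma GU_sub : GA :|: GB \subset pairs N.
Proof.
apply/subsetP => e; rewrite inE => /orP[/(subsetP hGA)|/(subsetP hGB)];
  rewrite !inE; [by case/andP=> [/andP[]]|by case/andP].
Qed.

Lemma GU_min e z : e \in GA :|: GB -> z \in e -> (a <= z)%N.
Proof.
move=> eG ze; apply: amin.
move: eG; rewrite inE => /orP[/(subsetP hGA)|/(subsetP hGB)]; rewrite !inE.
  by case/andP=> [/andP[_ /subsetP/(_ z ze)]].
by case/andP=> [_ /subsetP/(_ z ze)]; rewrite inE => /andP[].
Qed.

Lemma GB_noa e : e \in GB -> a \notin e.
Proof.
move/(subsetP hGB); rewrite !inE => /andP[_ /subsetP h]; apply/negP => /h.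
by rewrite !inE eqxx.
Qed.

Lemma GU_a z : ([set a; z] \in GA :|: GB) = ([set a; z] \in GA).
Proof.
rewrite inE; case: ([set a; z] \in GA) => //=; apply/negP => /GB_noa.
by rewrite set21.
Qed.

Lemma Gp_GU v : Gp (GA :|: GB) a v = [set e in GB | v \notin e].
Proof.
apply/setP => e; rewrite !inE; case eGB: (e \in GB).
  by rewrite orbT (GB_noa eGB).
rewrite orbF; case eGA: (e \in GA) => //=.
by move: (subsetP hGA _ eGA); rewrite inE => /andP[_ ->].
Qed.
End Union.

Lemma mtU_v (GA GB : {set {set 'I_N}}) v y : GA \subset Aa -> GB \subset Bs ->
  [set a; v] \in GA -> (forall z, [set a; z] \in GA -> (v <= z)%N) ->
  y != a -> mt (GA :|: GB) v y = false.
Proof.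
move=> hGA hGB hv vmin ya; apply: (@mt_v _ _ a v) => //.
- exact: GU_sub.
- exact: (@GU_min GA GB hGA hGB).
- by rewrite (@GU_a GA GB hGB).
by move=> z; rewrite (@GU_a GA GB hGB); apply: vmin.
Qed.

Lemma h_peel (GA : {set {set 'I_N}}) v x y : GA \subset Aa -> [set a; v] \in GA ->
  (forall z, [set a; z] \in GA -> (v <= z)%N) ->
  x \in V :\ a :\ v -> y \in V :\ a :\ v ->
  Pr p Bs (fun GB => (mt (GA :|: GB) x y)%:R) = Pm (V :\ a :\ v) x y.
Proof.
move=> hGA hv vmin xW yW.
have xa : x != a by move: xW; rewrite !inE => /and3P[].
have xv : x != v by move: xW; rewrite !inE => /and3P[].
have ya : y != a by move: yW; rewrite !inE => /and3P[].
have yv : y != v by move: yW; rewrite !inE => /and3P[].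
rewrite /Pm; transitivity (Pr p Bs (fun GB => (mt [set e in GB | v \notin e] x y)%:R)).
  apply: eq_Pr => GB hGB; congr ((nat_of_bool _)%:R).
  rewrite -(Gp_GU hGA hGB) -mt_peel //.
  - exact: GU_sub.
  - exact: GU_min.
  - by rewrite GU_a.
  by move=> z; rewrite GU_a //; apply: vmin.
have nv : forall A : {set {set 'I_N}}, A \subset pairsV (V :\ a :\ v) -> forall e, e \in A -> v \notin e.
  move=> A hA e eA; move: (subsetP hA _ eA); rewrite !inE => /andP[_ /subsetP h].
  by apply/negP => /h; rewrite !inE eqxx.
rewrite /Bs (pairsV_split (V :\ a) v) setUC Pr_local //; last first.
- move=> A1 A2 h1 h2; congr ((nat_of_bool _)%:R); congr (mt _ x y).
  apply/setP => e; rewrite !inE; case e1: (e \in A1) => /=.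
    by rewrite (nv _ h1 _ e1).
  case e2: (e \in A2) => //=.
  by move: (subsetP h2 _ e2); rewrite !inE => /andP[_ ->].
- by rewrite disjoint_sym pairsV_disj.
apply: eq_Pr => A hA; congr ((nat_of_bool _)%:R); congr (mt _ x y).
apply/setP => e; rewrite !inE; case eA: (e \in A) => //=.
by rewrite (nv _ hA _ eA).
Qed.

Lemma rk_a : rk V a = 1%N.
Proof.
rewrite /rk (_ : [set z in V | (z <= a)%N] = [set a]) ?cards1 //.
apply/setP => z; rewrite !inE; apply/idP/idP => [/andP[zV za]|/eqP->].
  by apply/eqP/val_inj/eqP; rewrite eqn_leq za amin.
by rewrite aV leqnn.
Qed.

Lemma card_Zle t : t \in V -> #|Zle t| = (rk V t - 1)%N.
Proof. by move=> tV; rewrite /Zle -/(rk (V :\ a) t) rkD1 // amin. Qed.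

Lemma card_Zlt t : t \in V :\ a -> #|Zlt t| = (rk V t - 2)%N.
Proof.
move=> tVa; have tV : t \in V by move: tVa; rewrite inE => /andP[].
have -> : Zlt t = Zle t :\ t.
  apply/setP => z; rewrite !inE ltn_neqAle val_eqE.
  by case: (z == t); case: (z == a); case: (z \in V); case: (z <= t)%N.
have := cardsD1 t (Zle t); rewrite card_Zle // inE tVa leqnn /=.
have at_ : (a < t)%N.
  rewrite ltn_neqAle val_eqE eq_sym amin // andbT.
  by move: tVa; rewrite !inE => /andP[].
have := rk_lt aV tV at_; rewrite rk_a; lia.
Qed.

End Nbr.

Lemma bF (b : bool) : ~ b -> b = false.
Proof. by case: b. Qed.
Lemma bT (b : bool) : b -> b = true.
Proof. by case: b. Qed.

Lemma neq_lt (s t : 'I_N) : (s < t)%N -> s != t.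
Proof. by move=> h; apply/eqP => e; rewrite e ltnn in h. Qed.
Lemma neq_gt (s t : 'I_N) : (t < s)%N -> s != t.
Proof. by move=> h; apply/eqP => e; rewrite e ltnn in h. Qed.

Ltac bsimp := repeat match goal with
  |- context [nat_of_bool ((?a <= ?b)%N)] =>
    first [rewrite (bT (_ : (a <= b)%N)); last lia
          | rewrite (bF (_ : ~ (a <= b)%N)); last lia] end.

Lemma leF (s t : nat) : (t < s)%N -> (s <= t)%N = false.
Proof. by move=> h; rewrite leqNgt h. Qed.
Lemma ltF (s t : nat) : (t <= s)%N -> (s < t)%N = false.
Proof. by move=> h; rewrite ltnNge h. Qed.

Lemma nb0 : (nat_of_bool false)%:R = 0 :> R. Proof. by []. Qed.
Lemma nb1 : (nat_of_bool true)%:R = 1 :> R. Proof. by []. Qed.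

Lemma ar1 k : (k.+2 - 1 - 1 = k)%N. Proof. lia. Qed.
Lemma ar2 k : (k.+2 - 1 - 0 = k.+1)%N. Proof. lia. Qed.
Lemma ar3 m : (m - 1 - 1 = m - 2)%N. Proof. lia. Qed.
Lemma ar4 m : (m - 1 - 0 = m - 1)%N. Proof. lia. Qed.

Lemma mt_diag G x : G \subset pairs N -> mt G x x = false.
Proof. by move=> hG; apply/negbTE/negP => h; have := mt_sub hG h; rewrite eqxx. Qed.

Lemma main_ind n : forall V, (#|V| <= n)%N -> forall x y, x \in V -> y \in V ->
  Pm V x y = Dsym (rk V x) (rk V y).
Proof.
elim: n => [|n IH] V hV x y xV yV.
  by move: hV; rewrite leqn0 cards_eq0 => /eqP VE; rewrite VE inE in xV.
have core : forall x y, x \in V -> y \in V -> (x < y)%N ->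
    Pm V x y = Dsym (rk V x) (rk V y).
  move=> {}x {}y {}xV {}yV xy.
  have ij := rk_lt xV yV xy.
  rewrite Dsym_le ?(ltnW ij) //.
  case: (@arg_minnP _ x (fun z => z \in V) (fun z : 'I_N => nat_of_ord z) xV)
    => a aV amin.
  rewrite /Pm (pairsV_split V a) Pr_split ?pairsV_disj // -/(Aa V a) -/(Bs V a).
  have aVa : forall t, t \in V -> t != a -> t \in V :\ a.
    by move=> t tV ta; rewrite !inE ta tV.
  have cVa : (#|V :\ a| <= n)%N by move: hV; rewrite (cardsD1 a V) aV /=.
  have IHa : x \in V :\ a -> y \in V :\ a ->
      Pm (V :\ a) x y = Dsym (rk V x - 1) (rk V y - 1).
    move=> xVa yVa; rewrite IH // !rkD1 // !amin //.
  have IHW : forall v, v \in V :\ a -> x \in V :\ a :\ v -> y \in V :\ a :\ v ->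
      Pm (V :\ a :\ v) x y =
      Dsym (rk V x - 1 - (v <= x)%N) (rk V y - 1 - (v <= y)%N).
    move=> v vVa xW yW; rewrite IH //; first by rewrite !rkD1 // !amin.
    by rewrite (cardsD1 v (V :\ a)) vVa /= in cVa; exact: leq_trans (leqnSn _) cVa.
  have sZlt : forall t, Zlt V a t \subset V :\ a.
    by move=> t; apply/subsetP => z; rewrite inE => /andP[].
  have sZle : forall t, Zle V a t \subset V :\ a.
    by move=> t; apply/subsetP => z; rewrite inE => /andP[].
  have ay : (a < y)%N by have := amin x xV; lia.
  have yVa : y \in V :\ a by apply: aVa => //; apply: neq_gt.
  case: (altP (x =P a)) => [xa|xna].
  { subst x; have r1 := rk_a aV amin; rewrite r1 in ij *; rewrite /= ij.
    rewrite (@eq_Pr _ _ _ _ _ (fun GA => (noNb a GA (Zlt V a y))%:R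
                                      - (noNb a GA (Zle V a y))%:R)).
      rewrite PrB !Pr_noNb // card_Zlt // card_Zle //.
      have -> : (rk V y - 1 = (rk V y - 2).+1)%N by lia.
      rewrite exprS; ring.
    move=> GA hGA; case: (nb_cases hGA) => [->|[v [hv vmin vVa]]].
      rewrite !noNb0 subrr (@eq_Pr _ _ _ _ _ (fun _ => 0)) ?Pr_const //.
      move=> GB hGB; rewrite set0U mt_iso //; exact: GB_noa hGB.
    rewrite (noNb_lt aV hv vmin hGA) (noNb_le aV hv vmin hGA).
    rewrite (@eq_Pr _ _ _ _ _ (fun _ => (y == v)%:R)) ?Pr_const //.
      by rewrite -val_eqE /=; case: ltngtP => h /=; rewrite ?subrr ?subr0.
    move=> GB hGB; rewrite (@mt_a _ _ _ v (GU_sub hGA hGB) (@GU_min _ _ amin _ _ hGA hGB)) //.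
    - by rewrite (@GU_a _ _ GA _ hGB).
    - by move=> z; rewrite (@GU_a _ _ GA _ hGB); apply: vmin.
    apply: stable_exists; apply: subset_trans (GU_sub hGA hGB).
    by apply/subsetP => e; rewrite inE => /andP[]. }
  have ax : (a < x)%N by rewrite ltn_neqAle val_eqE eq_sym xna amin.
  have xVa : x \in V :\ a by apply: aVa.
  have [k ik] : exists k, rk V x = k.+2.
    have := rk_lt aV xV ax; rewrite (rk_a aV amin) => h.
    by exists (rk V x - 2)%N; lia.
  rewrite ik E_step; rewrite ik in ij; rewrite ij.
  rewrite (@eq_Pr _ _ _ _ _ (fun GA =>
     E k (rk V y - 2) * (1 - (noNb a GA (Zlt V a x))%:R)
     + E k.+1 (rk V y - 2) * ((noNb a GA (Zle V a x))%:R - (noNb a GA (Zlt V a y))%:R)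
     + E k.+1 (rk V y - 1) * (noNb a GA (Zle V a y))%:R)).
    rewrite !PrD !PrZ !PrB Pr_const !Pr_noNb // !card_Zlt // !card_Zle // ik.
    rewrite !subSS !subn0; ring.
  move=> GA hGA; case: (nb_cases hGA) => [->|[v [hv vmin vVa]]].
    rewrite !noNb0 (@eq_Pr _ _ _ _ _ (fun GB => (mt GB x y)%:R)); last first.
      by move=> GB _; rewrite set0U.
    rewrite -/(Pm (V :\ a) x y); rewrite IHa // ik Dsym_le; last lia.
    rewrite subSS subn0 /=; ring.
  rewrite !(noNb_lt aV hv vmin hGA) !(noNb_le aV hv vmin hGA).
  have PrU0 : forall c, c = 0 -> (forall GB : {set {set 'I_N}}, GB \subset Bs V a -> mt (GA :|: GB) x y = false) ->
      Pr p (Bs V a) (fun GB => (mt (GA :|: GB) x y)%:R) = c.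
    move=> c -> h; rewrite (@eq_Pr _ _ _ _ _ (fun _ => 0)) ?Pr_const //.
    by move=> GB hGB; rewrite h.
  case: (ltngtP v x) => vx.
  - have xW : x \in V :\ a :\ v by rewrite !inE (neq_gt vx) xna xV.
    have vy := ltn_trans vx xy.
    have yW : y \in V :\ a :\ v by rewrite !inE (neq_gt vy) (neq_gt ay) yV.
    rewrite (h_peel amin hGA hv vmin xW yW) (IHW v vVa xW yW) ik.
    rewrite ?(leF vx) ?(ltF (ltnW vx)) ?(leF vy) ?(ltF (ltnW vy)) ?(ltnW vx) ?(ltnW vy).
    rewrite [LHS]/= Dsym_le ?nb0 ?nb1; last by clear -ij; lia.
    rewrite ar1.
    rewrite ar3.
    ring.
  - case: (ltngtP v y) => vy.
    + have xW : x \in V :\ a :\ v by rewrite !inE (neq_lt vx) xna xV.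
      have yW : y \in V :\ a :\ v by rewrite !inE (neq_gt vy) (neq_gt ay) yV.
      rewrite (h_peel amin hGA hv vmin xW yW) (IHW v vVa xW yW) ik.
      rewrite ?(ltnW vx) ?vx ?(leF vy) ?(ltF (ltnW vy)) ?(leF vx) ?(ltnW vy).
      rewrite [LHS]/= Dsym_le ?nb0 ?nb1; last by clear -ij; lia.
      rewrite ar2.
      rewrite ar3.
      ring.
    + have xW : x \in V :\ a :\ v by rewrite !inE (neq_lt vx) xna xV.
      have yW : y \in V :\ a :\ v by rewrite !inE (neq_lt vy) (neq_gt ay) yV.
      rewrite (h_peel amin hGA hv vmin xW yW) (IHW v vVa xW yW) ik.
      rewrite ?(ltnW vx) ?vx ?(ltnW vy) ?vy ?(leF vx) ?(leF vy).
      rewrite [LHS]/= Dsym_le ?nb0 ?nb1; last by clear -ij; lia.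
      rewrite ar2.
      rewrite ar4.
      ring.
    + have e : v = y by apply: val_inj.
      subst v; rewrite ?(ltnW vx) ?vx ?leqnn ?ltnn.
      apply: PrU0; first by rewrite ?nb0 ?nb1; ring.
      move=> GB hGB; rewrite mtC; apply: (mtU_v amin hGA hGB hv vmin xna).
  - have e : v = x by apply: val_inj.
    subst v; rewrite ?leqnn ?ltnn ?(leF xy) ?(ltF (ltnW xy)).
    apply: PrU0; first by rewrite ?nb0 ?nb1; ring.
    move=> GB hGB; apply: (mtU_v amin hGA hGB hv vmin); exact: neq_gt ay.
case: (ltngtP x y) => [xy|yx|exy]; first exact: core.
  rewrite DsymC -core //; apply: eq_Pr => G _; by rewrite mtC.
have <- : x = y by apply: val_inj.
rewrite /Dsym ltnn E_ge // /Pm (@eq_Pr _ _ _ _ _ (fun _ => 0)) ?Pr_const //.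
move=> G hG; rewrite mt_diag //; exact: subset_trans hG (pairsV_sub V).
Qed.

End Main.

End M3.
Import M3.

Local Open Scope ring_scope.

Lemma rk_setT N (u : 'I_N) : rk [set: 'I_N] u = u.+1.
Proof.
have hu : (u.+1 <= N)%N by [].
rewrite /rk (_ : [set z in [set: 'I_N] | (z <= u)%N] = [set widen_ord hu z | z : 'I_(u.+1)]).
  rewrite card_imset ?card_ord //.
  by move=> z1 z2 /(congr1 val) /= e; apply: val_inj.
apply/setP => z; rewrite !inE; apply/idP/imsetP => [zu|[z' _ ->]].
  by exists (Ordinal (zu : (z < u.+1)%N)) => //; apply: val_inj.
by rewrite /= -ltnS.
Qed.

Lemma DN_Pm (R : realFieldType) (p : R) N i j (u w : 'I_N) :
  u.+1 = i -> w.+1 = j -> DN N p i j = Pm p [set: 'I_N] u w.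
Proof.
move=> hi hj; rewrite /DN /Pm /Pr.
have -> : pairsV [set: 'I_N] = pairs N.
  by apply/setP => e; rewrite /pairsV !inE subsetT andbT.
rewrite big_mkcondr; apply: eq_bigr => G _.
have -> : matched_ij G i j = mt G u w.
  apply/existsP/idP => [[u' /existsP[w' /and3P[/eqP hu /eqP hw m]]]|m].
    have -> : u = u' by apply: val_inj; rewrite /=; lia.
    have -> : w = w' by apply: val_inj; rewrite /=; lia.
    exact: m.
  by exists u; apply/existsP; exists w; rewrite hi hj !eqxx.
by case: (mt G u w); rewrite ?mulr1 ?mulr0.
Qed.

Unset Implicit Arguments.

Theorem mainTheorem4 (R : realFieldType) (p : R) (hp0 : 0 < p) (hp1 : p <= 1) :
  exists D : nat -> nat -> R,
    [/\ (forall (N i j : nat), (2 <= N)%N -> (1 <= i)%N -> (1 <= j)%N ->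
           (maxn i j <= N)%N -> DN N p i j = D i j),
        (forall i : nat, (1 <= i)%N -> D i i = 0),
        (forall i j : nat, (1 <= i)%N -> (1 <= j)%N -> D i j = D j i),
        (forall k : nat, (2 <= k)%N -> D 1%N k = p * (1 - p) ^+ (k - 2)) &
        (forall i j : nat, (2 <= i)%N -> (i < j)%N ->
           D i j =
             (if i == 2%N then 0
              else (1 - (1 - p) ^+ (i - 2)) * D (i - 2)%N (j - 2)%N)
             + ((1 - p) ^+ (i - 1) - (1 - p) ^+ (j - 2)) * D (i - 1)%N (j - 2)%N
             + (1 - p) ^+ (j - 1) * D (i - 1)%N (j - 1)%N)].
Proof.
exists (Dsym p); split.
- move=> N i j _ hi hj hm.
  have hu : (i.-1 < N)%N by move: hm; rewrite geq_max; lia.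
  have hw : (j.-1 < N)%N by move: hm; rewrite geq_max; lia.
  rewrite (@DN_Pm _ _ _ _ _ (Ordinal hu) (Ordinal hw)) /=; try lia.
  rewrite (@main_ind _ p _ _ [set: 'I_N] (leqnn _)) ?inE // !rk_setT /=.
  by congr Dsym; lia.
- by move=> i _; rewrite /Dsym ltnn E_ge.
- by move=> i j _ _; rewrite DsymC.
- by move=> k hk; rewrite Dsym_le ?(ltnW hk) //= hk.
move=> i j hi ij.
have [k ik] : exists k, i = k.+2 by exists (i - 2)%N; lia.
subst i.
rewrite Dsym_le ?(ltnW ij) //.
have Es := E_step p k j; rewrite Es ij.
rewrite !subSS !subn0.
rewrite (@Dsym_le _ p k (j - 2)); last lia.
rewrite (@Dsym_le _ p k.+1 (j - 2)); last lia.
rewrite (@Dsym_le _ p k.+1 (j - 1)); last lia.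
clear hi Es; case: k ij => [|k] ij //=.
by rewrite mulr0.
Qed.
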